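(* For every prime power $q$, $\mathbb{E}_q(3)=2^{\lfloor\log_2(q^2+q+2)\rfloor}$.
   Context: $\mathbb{P}_q(n)$ denotes the set of all subspaces of $\mathbb{F}_q^n$. For subspaces $X,Y$ the subspace distance is $d_S(X,Y)=\dim X+\dim Y-2\dim(X\cap Y)$. A linear code in $\mathbb{P}_q(n)$ is a subset $\mathcal{U}\subseteq\mathbb{P}_q(n)$ with $\{0\}\in\mathcal{U}$ for which there exists a map $\boxplus:\mathcal{U}\times\mathcal{U}\to\mathcal{U}$ such that (i) $(\mathcal{U},\boxplus)$ is an abelian group; (ii) its identity element is $\{0\}$; (iii) $X\boxplus X=\{0\}$ for all $X\in\mathcal{U}$; (iv) $d_S(Y_1\boxplus X,Y_2\boxplus X)=d_S(Y_1,Y_2)$ for all $Y_1,Y_2,X\in\mathcal{U}$. It is equidistant if there is $r$ with $d_S(X,Y)=r$ for all distinct $X,Y\in\mathcal{U}$. $\mathbb{E}_q(n)$ denotes the maximum size of an equidistant linear code in $\mathbb{P}_q(n)$. *)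

(* Defs.v *)
From HB Require Import structures.
From mathcomp Require Import all_boot all_order all_algebra all_field.
Set Implicit Arguments. Unset Strict Implicit. Unset Printing Implicit Defensive.
Import GRing.Theory.
Local Open Scope ring_scope.

Notation subsp F n := {vspace 'rV[F]_n}.

Definition dS {F : fieldType} {n : nat} (X Y : subsp F n) : nat :=
  (\dim X + \dim Y - 2 * \dim (X :&: Y))%N.

Definition linear_code {F : fieldType} {n : nat} (U : seq (subsp F n)) : Prop :=
  uniq U /\ (0%VS \in U) /\
  exists bp : subsp F n -> subsp F n -> subsp F n,
       {in U &, forall X Y, bp X Y \in U}
    /\
       (forall X Y Z, X \in U -> Y \in U -> Z \in U -> bp X (bp Y Z) = bp (bp X Y) Z)
    /\ {in U &, forall X Y, bp X Y = bp Y X}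
    /\ {in U, forall X, bp 0%VS X = X}
    /\ {in U, forall X, exists2 Y, Y \in U & bp X Y = 0%VS}
    /\ {in U, forall X, bp X X = 0%VS}
    /\
       (forall Y1 Y2 X, Y1 \in U -> Y2 \in U -> X \in U ->
          dS (bp Y1 X) (bp Y2 X) = dS Y1 Y2).

Definition equidistant {F : fieldType} {n : nat} (U : seq (subsp F n)) : Prop :=
  exists r : nat, {in U &, forall X Y, X != Y -> dS X Y = r}.

Definition equidistant_linear_code {F : fieldType} {n : nat} (U : seq (subsp F n)) : Prop :=
  linear_code U /\ equidistant U.

(* Main.v *)
Require Import Defs.
From HB Require Import structures.
From mathcomp Require Import all_boot all_order all_algebra all_field.
From Stdlib Require PeanoNat.
From mathcomp Require Import zify ring.
Set Implicit Arguments. Unset Strict Implicit. Unset Printing Implicit Defensive.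
Import GRing.Theory.
Local Open Scope ring_scope.

Section PowTwo.
Variables (T : eqType) (U : seq T) (z : T) (bp : T -> T -> T).
Hypotheses (Uu : uniq U) (zU : z \in U)
  (cl : {in U &, forall X Y, bp X Y \in U})
  (asc : forall X Y Z, X \in U -> Y \in U -> Z \in U -> bp X (bp Y Z) = bp (bp X Y) Z)
  (cm : {in U &, forall X Y, bp X Y = bp Y X})
  (id0 : {in U, forall X, bp z X = X})
  (nil0 : {in U, forall X, bp X X = z}).

Lemma bpK a x : a \in U -> x \in U -> bp a (bp a x) = x.
Proof. by move=> aU xU; rewrite asc // nil0 // id0. Qed.

Lemma pow2_aux m S : uniq S -> {subset S <= U} -> z \in S ->
  {in S &, forall X Y, bp X Y \in S} -> (exists j, size S = 2 ^ j)%N ->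
  (size U - size S <= m)%N -> exists k, size U = (2 ^ k)%N.
Proof.
elim: m S => [|m IH] S Su SU zS clS [j Sj] Hm.
  exists j; rewrite -Sj; apply: anti_leq; apply/andP; split; [lia| exact: uniq_leq_size].
case: (boolP (all (mem S) U)) => [sUS0|].
  have sUS : {subset U <= S} by move=> x xU; exact: (allP sUS0 x xU).
  exists j; rewrite -Sj; apply: anti_leq; apply/andP; split.
  exact: uniq_leq_size. exact: uniq_leq_size.
case/allPn => a aU aS.
have aSU : forall s, s \in S -> bp a s \in U by move=> s /SU sU; apply: cl.
have inj : {in S &, injective (bp a)}.
  move=> x y /SU xU /SU yU e; by rewrite -(bpK aU xU) e bpK.
have Hdis : forall s t, s \in S -> t \in S -> bp a s != t.
  move=> s t sS tS; apply/eqP => e; move: aS; rewrite /=.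
  have: bp t s = a.
    by rewrite -e -asc ?(SU s) // nil0 ?(SU s) // cm ?id0 // (SU z).
  by move=> <-; rewrite clS.
have Hu : uniq (S ++ map (bp a) S).
  rewrite cat_uniq Su map_inj_in_uniq // Su andbT /=.
  apply/hasPn => x /mapP [s sS ->] /=; apply/negP => H.
  by move: (Hdis s _ sS H); rewrite eqxx.
have Hs : {subset S ++ map (bp a) S <= U}.
  by move=> x; rewrite mem_cat => /orP [/SU //| /mapP [s sS ->]]; apply aSU.
apply: (IH (S ++ map (bp a) S)) => //.
- by rewrite mem_cat zS.
- have Hm1 : forall s t, s \in S -> t \in S -> bp s (bp a t) = bp a (bp s t).
    move=> s t sS tS; have sU := SU s sS; have tU := SU t tS.
    by rewrite asc // (cm sU aU) -asc.
  move=> x y; rewrite !mem_cat => /orP [xS | /mapP [s sS ->]] /orP [yS | /mapP [t tS ->]].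
  + by rewrite clS.
  + by rewrite Hm1 // map_f ?orbT ?clS.
  + rewrite cm ?(SU y) ?aSU // Hm1 // map_f ?orbT ?clS //.
  + have sU := SU s sS; have tU := SU t tS.
    rewrite asc ?cl // (cm (cl aU sU) aU) bpK //.
    by rewrite clS.
- exists j.+1; rewrite size_cat size_map Sj expnS; lia.
- have := uniq_leq_size Hu Hs; rewrite size_cat size_map.
  have: (0 < size S)%N by case: (S) zS.
  lia.
Qed.

Lemma pow2_size : exists k, size U = (2 ^ k)%N.
Proof.
apply: (@pow2_aux (size U) [:: z]) => //.
- by move=> x; rewrite inE => /eqP ->.
- by rewrite inE.
- by move=> x y; rewrite !inE => /eqP -> /eqP ->; rewrite nil0.
- by exists 0%N.
- lia.
Qed.
End PowTwo.
Section Geom.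
Variable F : fieldType.
Definition i0 : 'I_3 := @Ordinal 3 0 isT.
Definition i1 : 'I_3 := @Ordinal 3 1 isT.
Definition i2 : 'I_3 := @Ordinal 3 2 isT.

Lemma ord3P (j : 'I_3) : j = i0 \/ j = i1 \/ j = i2.
Proof.
case: j => [[|[|[|m]]] Hm].
- by left; apply: val_inj.
- by right; left; apply: val_inj.
- by right; right; apply: val_inj.
- by [].
Qed.

Definition dot (x n : 'rV[F]_3) : F := \sum_(j < 3) x ord0 j * n ord0 j.

Lemma dotE x n : dot x n = x ord0 i0 * n ord0 i0 + x ord0 i1 * n ord0 i1 + x ord0 i2 * n ord0 i2.
Proof.
rewrite /dot !big_ord_recl big_ord0 addr0 addrA.
have -> : (lift ord0 (lift ord0 (ord0 : 'I_1)) : 'I_3) = i2 by apply: val_inj.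
have -> : (lift ord0 (ord0 : 'I_2) : 'I_3) = i1 by apply: val_inj.
have -> : (ord0 : 'I_3) = i0 by apply: val_inj.
by [].
Qed.

Definition vec3 (a b c : F) : 'rV[F]_3 :=
  \row_(j < 3) (if j == i0 then a else if j == i1 then b else c).

Lemma vec3E0 a b c : vec3 a b c ord0 i0 = a. Proof. by rewrite mxE. Qed.
Lemma vec3E1 a b c : vec3 a b c ord0 i1 = b. Proof. by rewrite mxE. Qed.
Lemma vec3E2 a b c : vec3 a b c ord0 i2 = c. Proof. by rewrite mxE. Qed.

Lemma dot3 a b c d e f : dot (vec3 a b c) (vec3 d e f) = a * d + b * e + c * f.
Proof. by rewrite dotE !vec3E0 !vec3E1 !vec3E2. Qed.

Definition fK (n : 'rV[F]_3) : 'Hom('rV[F]_3, 'rV[F]_1) := linfun (mulmxr n^T).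
Definition Kn (n : 'rV[F]_3) : {vspace 'rV[F]_3} := lker (fK n).

Lemma memK x n : (x \in Kn n) = (dot x n == 0).
Proof.
rewrite memv_ker /fK lfunE /=.
apply/eqP/eqP => [/matrixP/(_ ord0 ord0)|H].
  by rewrite !mxE /dot => H; apply: etrans H; apply: eq_bigr => j _; rewrite mxE.
apply/matrixP => i j; rewrite !ord1 !mxE -[RHS]H /dot.
by apply: eq_bigr => k _; rewrite mxE.
Qed.

Lemma dim_rV3 : \dim (fullv : {vspace 'rV[F]_3}) = 3%N.
Proof. by rewrite dimvf /dim /=. Qed.

Lemma row3_eq0 (n : 'rV[F]_3) :
  n ord0 i0 = 0 -> n ord0 i1 = 0 -> n ord0 i2 = 0 -> n = 0.
Proof.
move=> h0 h1 h2; apply/rowP => j; rewrite mxE.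
by case: (ord3P j) => [->|[->|->]].
Qed.

Lemma dimK n : n != 0 -> (\dim (Kn n) = 2)%N.
Proof.
move=> nz.
have := limg_ker_dim (fK n) fullv.
rewrite capfv dim_rV3 -/(Kn n).
have : (\dim (fK n @: fullv) <= 1)%N.
  by have := dimvS (subvf (fK n @: fullv)); rewrite dimvf /dim.
have : (\dim (fK n @: fullv) != 0)%N.
  rewrite dimv_eq0; apply/eqP => H.
  have [j nj] : exists j, n ord0 j != 0.
    apply/existsP; apply: contraR nz; rewrite negb_exists => /forallP H'.
    by apply/eqP/row3_eq0; apply/eqP; [move: (H' i0)|move: (H' i1)|move: (H' i2)]; rewrite negbK.
  have : fK n (delta_mx ord0 j) \in (0%VS : {vspace 'M[F]_(1,1)}).
    by rewrite -H memv_img ?memvf.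
  rewrite memv0 /fK lfunE /= => /eqP/matrixP/(_ ord0 ord0).
  rewrite !mxE (bigD1 j) //= big1 ?addr0.
    by rewrite !mxE !eqxx mul1r => /eqP; rewrite (negbTE nj).
  by move=> k kj; rewrite !mxE eqxx (negbTE kj) mul0r.
rewrite -lt0n => h1 h2 h3. have e : \dim (limg (fK n)) = 1%N by apply/eqP; rewrite eqn_leq h2 h1. rewrite e addn1 in h3. by case: h3.
Qed.

Lemma arith1 (a b : nat) : (a <= 2 -> a != 2 -> b <= 3 -> b + a = 2 + 2 -> 2 + 2 - 2 * a = 2)%N.
Proof. move=> ? /eqP; lia. Qed.

Lemma dS_distinct2 (P Q : {vspace 'rV[F]_3}) :
  \dim P = 2%N -> \dim Q = 2%N -> P != Q -> (dS P Q = 2)%N.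
Proof.
move=> dP dQ nPQ; rewrite /dS dP dQ.
have := dimv_sum_cap P Q.
have := dimvS (subvf (P + Q)%VS); rewrite dim_rV3.
have : (\dim (P :&: Q) != 2)%N.
  apply: contra nPQ => /eqP h.
  have e1 : (P :&: Q)%VS == P by rewrite eqEdim capvSl dP h.
  have e2 : (P :&: Q)%VS == Q by rewrite eqEdim capvSr dQ h.
  by rewrite -{1}(eqP e1) (eqP e2).
rewrite dP dQ; apply: arith1.
by have := dimvS (capvSl P Q); rewrite dP.
Qed.

Lemma dS0l (P : {vspace 'rV[F]_3}) : dS 0%VS P = \dim P.
Proof. by rewrite /dS cap0v dimv0 add0n muln0 subn0. Qed.
Lemma dS0r (P : {vspace 'rV[F]_3}) : dS P 0%VS = \dim P.
Proof. by rewrite /dS capv0 dimv0 addn0 muln0 subn0. Qed.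
Lemma dSxx (P : {vspace 'rV[F]_3}) : (dS P P = 0)%N.
Proof. by rewrite /dS capvv; lia. Qed.

Definition T3 := ((F * F) + (F + unit))%type.
Definition nk (k : T3) : 'rV[F]_3 :=
  match k with
  | inl (a, b) => vec3 1 a b
  | inr (inl c) => vec3 0 1 c
  | inr (inr _) => vec3 0 0 1
  end.

Lemma nk_neq0 k : nk k != 0.
Proof.
apply/eqP => H.
case: k H => [[a b]|[c|[]]] /= H.
- by have := congr1 (fun v : 'rV[F]_3 => v ord0 i0) H; rewrite vec3E0 mxE; apply/eqP; rewrite oner_eq0.
- by have := congr1 (fun v : 'rV[F]_3 => v ord0 i1) H; rewrite vec3E1 mxE; apply/eqP; rewrite oner_eq0.
- by have := congr1 (fun v : 'rV[F]_3 => v ord0 i2) H; rewrite vec3E2 mxE; apply/eqP; rewrite oner_eq0.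
Qed.

Lemma Kinj : injective (fun k => Kn (nk k)).
Proof.
move=> k m /= E.
have T : forall w, dot w (nk k) = 0 -> dot w (nk m) = 0.
  by move=> w /eqP h; apply/eqP; rewrite -memK -E memK.
case: k E T => [[a b]|[c|[]]] E T; case: m E T => [[c' d]|[d|[]]] E T /=.
- have h1 := T (vec3 (- a) 1 0); have h2 := T (vec3 (- b) 0 1).
  move: h1 h2; rewrite /= !dot3.
  move=> h1 h2.
  have e1 : c' = a.
    apply/eqP; rewrite -subr_eq0 addrC; apply/eqP.
    by move: (h1 ltac:(ring)); rewrite mulr1 => h; rewrite -h; ring.
  have e2 : d = b.
    apply/eqP; rewrite -subr_eq0 addrC; apply/eqP.
    by move: (h2 ltac:(ring)); rewrite mulr1 => h; rewrite -h; ring.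
  by rewrite e1 e2.
- have := T (vec3 (- a) 1 0); rewrite /= !dot3.
  move=> h; exfalso; move/eqP: (oner_neq0 F); apply; rewrite -[RHS](h ltac:(ring)); ring.
- have := T (vec3 (- b) 0 1); rewrite /= !dot3.
  move=> h; exfalso; move/eqP: (oner_neq0 F); apply; rewrite -[RHS](h ltac:(ring)); ring.
- have := T (vec3 1 0 0); rewrite /= !dot3.
  move=> h; exfalso; move/eqP: (oner_neq0 F); apply; rewrite -[RHS](h ltac:(ring)); ring.
- have := T (vec3 0 (- c) 1); rewrite /= !dot3.
  move=> h. have e : d = c.
    apply/eqP; rewrite -subr_eq0; apply/eqP.
    by move: (h ltac:(ring)) => h'; rewrite -h'; ring.
  by rewrite e.
- have := T (vec3 0 (- c) 1); rewrite /= !dot3.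
  move=> h; exfalso; move/eqP: (oner_neq0 F); apply; rewrite -[RHS](h ltac:(ring)); ring.
- have := T (vec3 1 0 0); rewrite /= !dot3.
  move=> h; exfalso; move/eqP: (oner_neq0 F); apply; rewrite -[RHS](h ltac:(ring)); ring.
- have := T (vec3 0 1 0); rewrite /= !dot3.
  move=> h; exfalso; move/eqP: (oner_neq0 F); apply; rewrite -[RHS](h ltac:(ring)); ring.
- by [].
Qed.

Definition key (n : 'rV[F]_3) : T3 :=
  if n ord0 i0 != 0 then inl (n ord0 i1 / n ord0 i0, n ord0 i2 / n ord0 i0)
  else if n ord0 i1 != 0 then inr (inl (n ord0 i2 / n ord0 i1))
  else inr (inr tt).

Lemma key_sub n : n != 0 -> (Kn n <= Kn (nk (key n)))%VS.
Proof.
move=> nz; apply/subvP => x; rewrite !memK dotE => /eqP h; apply/eqP.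
rewrite /key dotE.
case: ifP => [h0|/negbFE/eqP h0].
  rewrite /= !vec3E0 !vec3E1 !vec3E2.
  apply: (mulIf h0); rewrite mul0r -[RHS]h; field; exact: h0.
case: ifP => [h1|/negbFE/eqP h1].
  rewrite /= !vec3E0 !vec3E1 !vec3E2.
  apply: (mulIf h1); rewrite mul0r -[RHS]h h0; field; exact: h1.
have h2 : n ord0 i2 != 0.
  by apply: contra nz => /eqP h2; apply/eqP; apply: row3_eq0.
rewrite /= !vec3E0 !vec3E1 !vec3E2.
apply: (mulIf h2); rewrite mul0r -[RHS]h h0 h1; ring.
Qed.

Lemma plane_key (P : {vspace 'rV[F]_3}) : (\dim P = 2)%N -> exists k, P = Kn (nk k).
Proof.
move=> dP.
pose B := vbasis P.
pose M : 'M[F]_(3, 2) := \matrix_(j < 3, i < 2) (nth 0 B i) ord0 j.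
pose g : 'Hom('rV[F]_3, 'rV[F]_2) := linfun (mulmxr M).
have dg := limg_ker_dim g fullv.
rewrite capfv dim_rV3 in dg.
have : (\dim (limg g) <= 2)%N.
  by have := dimvS (subvf (limg g)); rewrite dimvf /dim.
move=> dl.
have : lker g != 0%VS.
  rewrite -dimv_eq0; apply/eqP => h0; rewrite h0 in dg; lia.
rewrite -vpick0 => nz.
set n := vpick (lker g) in nz.
have nK : n \in lker g by exact: memv_pick.
have Bn : forall b, b \in B -> dot b n = 0.
  move=> b bB.
  have sB : size B = 2%N by rewrite size_tuple.
  have ib : (index b B < 2)%N by move: bB; rewrite -index_mem sB.
  rewrite -(nth_index 0 bB).
  move: nK; rewrite memv_ker /g lfunE /= => /eqP/matrixP/(_ ord0 (Ordinal ib)).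
  rewrite !mxE => <-; rewrite /dot; apply: eq_bigr => j _; rewrite !mxE mulrC.
  by [].
exists (key n); apply/eqP; rewrite eqEdim (dimK (nk_neq0 _)) dP leqnn andbT.
apply: subv_trans (key_sub nz).
rewrite -(span_basis (vbasisP P)); apply/span_subvP => b bB.
by rewrite memK; apply/eqP; apply: Bn.
Qed.
End Geom.

Lemma powE m n : Nat.pow m n = (m ^ n)%N.
Proof. elim: n => [|n IH] //=; by rewrite expnS -IH. Qed.

Lemma lxor_lt t a b : (a < 2 ^ t -> b < 2 ^ t -> Nat.lxor a b < 2 ^ t)%N.
Proof.
case: t => [|t] ha hb.
  move: ha hb; rewrite expn0 !ltnS !leqn0 => /eqP -> /eqP ->; by [].
case E: (Nat.lxor a b) => [|x]; first by rewrite expn_gt0.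
have h := PeanoNat.Nat.log2_lxor a b; rewrite E in h.
have pos : (0 < x.+1)%coq_nat by apply/ltP.
apply/ltP; rewrite -powE; apply/(PeanoNat.Nat.log2_lt_pow2 _ _ pos).
have la : (Nat.log2 a < t.+1)%coq_nat.
  case: a ha {E h} => [|a] ha; first by change (Nat.log2 0) with 0%N; lia.
  have pa : (0 < a.+1)%coq_nat by apply/ltP.
  by apply/(PeanoNat.Nat.log2_lt_pow2 _ _ pa); rewrite powE; apply/ltP.
have lb : (Nat.log2 b < t.+1)%coq_nat.
  case: b hb {E h} => [|b] hb; first by change (Nat.log2 0) with 0%N; lia.
  have pb : (0 < b.+1)%coq_nat by apply/ltP.
  by apply/(PeanoNat.Nat.log2_lt_pow2 _ _ pb); rewrite powE; apply/ltP.
lia.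
Qed.

Section Main.
Variable F : finFieldType.
Notation T := ((F * F) + (F + unit))%type.

Definition codeU (t : nat) : seq {vspace 'rV[F]_3} :=
  0%VS :: map (fun k : T => Kn (nk k)) (take (2 ^ t).-1 (enum {: T})).

Lemma codeU_mem t X : X \in codeU t -> X = 0%VS \/ (\dim X = 2)%N.
Proof.
rewrite inE => /orP [/eqP -> | /mapP [k _ ->]]; first by left.
by right; apply: dimK; apply: nk_neq0.
Qed.

Lemma codeU_uniq t : uniq (codeU t).
Proof.
rewrite /codeU cons_uniq; apply/andP; split.
  apply/mapP => [[k _ /eqP]]; apply/negP.
  by rewrite eq_sym -dimv_eq0 dimK ?nk_neq0.
rewrite map_inj_uniq; first by apply: take_uniq; apply: enum_uniq.
exact: Kinj.
Qed.

Lemma codeU_size t : (2 ^ t <= #|{: T}| + 1)%N -> size (codeU t) = (2 ^ t)%N.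
Proof.
move=> h; rewrite /= size_map size_takel; last by rewrite -cardE -subn1 leq_subLR addnC.
by rewrite prednK // expn_gt0.
Qed.

Lemma codeU_dist t X Y : X \in codeU t -> Y \in codeU t ->
  dS X Y = if X == Y then 0%N else 2%N.
Proof.
move=> hX hY; case: eqP => [->|ne]; first exact: dSxx.
case: (codeU_mem hX) => [eX|dX]; case: (codeU_mem hY) => [eY|dY].
- by case: ne; rewrite eX eY.
- by rewrite eX dS0l.
- by rewrite eY dS0r.
- by apply: dS_distinct2 => //; apply/eqP.
Qed.
End Main.

Section Main2.
Variable F : finFieldType.
Notation T := ((F * F) + (F + unit))%type.

Lemma lxorK a b : Nat.lxor (Nat.lxor a b) b = a.
Proof. by rewrite PeanoNat.Nat.lxor_assoc PeanoNat.Nat.lxor_nilpotent PeanoNat.Nat.lxor_0_r. Qed.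

Definition xbp (U : seq {vspace 'rV[F]_3}) (X Y : {vspace 'rV[F]_3}) :=
  nth 0%VS U (Nat.lxor (index X U) (index Y U)).

Lemma elc_of (U : seq {vspace 'rV[F]_3}) t : uniq U -> size U = (2 ^ t)%N ->
  (0%VS : {vspace 'rV[F]_3}) \in U -> index (0%VS : {vspace 'rV[F]_3}) U = 0%N ->
  (forall X Y, X \in U -> Y \in U -> dS X Y = if X == Y then 0%N else 2%N) ->
  equidistant_linear_code U.
Proof.
move=> uU sU zU iz dist.
pose bp := xbp U.
have iinj : forall A B, A \in U -> B \in U -> index A U = index B U -> A = B.
  by move=> A B hA hB e; rewrite -(nth_index 0%VS hA) e nth_index.
have ilt : forall X, X \in U -> (index X U < 2 ^ t)%N by move=> X; rewrite -sU index_mem.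
have bpI : forall X Y, X \in U -> Y \in U -> index (bp X Y) U = Nat.lxor (index X U) (index Y U).
  by move=> X Y hX hY; rewrite /bp /xbp index_uniq // sU lxor_lt ?ilt.
have bpU : forall X Y, X \in U -> Y \in U -> bp X Y \in U.
  by move=> X Y hX hY; rewrite /bp /xbp mem_nth // sU lxor_lt ?ilt.
clearbody bp.
split; last first.
  by exists 2%N => X Y hX hY ne; rewrite dist // (negbTE ne).
split=> //; split=> //.
exists bp; split; first by move=> X Y; apply: bpU.
split.
  move=> X Y Z hX hY hZ.
  have hYZ := bpU Y Z hY hZ; have hXY := bpU X Y hX hY.
  apply: iinj; [exact: bpU | exact: bpU | ].
  rewrite (bpI X _ hX hYZ) (bpI _ Z hXY hZ) (bpI Y Z hY hZ) (bpI X Y hX hY).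
  exact: esym (PeanoNat.Nat.lxor_assoc _ _ _).
split.
  move=> X Y hX hY; apply: iinj; [exact: bpU | exact: bpU | ].
  rewrite (bpI X Y hX hY) (bpI Y X hY hX); exact: PeanoNat.Nat.lxor_comm.
split.
  move=> X hX; apply: iinj; [exact: bpU | exact: hX | ].
  rewrite (bpI _ X zU hX) iz; exact: PeanoNat.Nat.lxor_0_l.
split.
  move=> X hX; exists X => //; apply: iinj; [exact: bpU | exact: zU | ].
  rewrite (bpI X X hX hX) iz; exact: PeanoNat.Nat.lxor_nilpotent.
split.
  move=> X hX; apply: iinj; [exact: bpU | exact: zU | ].
  rewrite (bpI X X hX hX) iz; exact: PeanoNat.Nat.lxor_nilpotent.
move=> Y1 Y2 X h1 h2 hX.
rewrite (dist _ _ (bpU _ _ h1 hX) (bpU _ _ h2 hX)) (dist _ _ h1 h2).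
have -> : (bp Y1 X == bp Y2 X) = (Y1 == Y2).
  apply/eqP/eqP => [e|->]; last reflexivity.
  have e' : index (bp Y1 X) U = index (bp Y2 X) U by rewrite e.
  rewrite (bpI _ _ h1 hX) (bpI _ _ h2 hX) in e'.
  have e'' : index Y1 U = index Y2 U.
    by rewrite -(lxorK (index Y1 U) (index X U)) e' lxorK.
  by rewrite -(nth_index 0%VS h1) e'' nth_index.
by [].
Qed.
Lemma codeU_elc t : (2 ^ t <= #|{: T}| + 1)%N -> equidistant_linear_code (codeU F t).
Proof.
move=> ht; apply: (@elc_of _ t).
- exact: codeU_uniq.
- exact: codeU_size.
- by rewrite inE eqxx.
- by rewrite /codeU /= eqxx.
- by move=> X Y; apply: codeU_dist.
Qed.
End Main2.

Lemma arith2 (r d : nat) : (d <= r -> d != r -> r <= 3 -> r + r - 2 * d = r -> r = 2)%N.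
Proof. move=> ? /eqP; lia. Qed.

Section Main3.
Variable F : finFieldType.
Notation T := ((F * F) + (F + unit))%type.

Lemma upper_size (U : seq {vspace 'rV[F]_3}) :
  equidistant_linear_code U -> (size U <= #|{: T}| + 1)%N.
Proof.
case=> [[uU [zU _]] [r hr]].
set U' := filter (fun X => X != 0%VS) U.
have sU : size U = (size U').+1.
  rewrite -[LHS](count_predC (pred1 0%VS)) (count_uniq_mem _ uU) zU size_filter.
  by rewrite add1n.
have cT : (1 <= #|{: T}|)%N by rewrite card_sum card_sum card_unit; lia.
case: (leqP (size U') 1) => h; first by rewrite sU; lia.
have uU' : uniq U' by apply: filter_uniq.
set X := nth 0%VS U' 0; set Y := nth 0%VS U' 1.
have XU' : X \in U' by apply: mem_nth; lia.
have YU' : Y \in U' by apply: mem_nth; lia.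
have nXY : X != Y by rewrite /X /Y nth_uniq //; lia.
move: (XU') (YU'); rewrite !mem_filter => /andP [nX XU] /andP [nY YU].
have dimr : forall Z, Z \in U -> Z != 0%VS -> \dim Z = r.
  by move=> Z ZU nZ; rewrite -(dS0r Z); apply: hr.
have r2 : r = 2%N.
  apply: (@arith2 r (\dim (X :&: Y))).
  - by rewrite -(dimr X XU nX) dimvS // capvSl.
  - apply: contra nXY => /eqP h1.
    have e1 : (X :&: Y)%VS == X.
      rewrite -(dimv_leqif_eq (capvSl X Y)).2; apply/eqP; exact: etrans h1 (esym (dimr X XU nX)).
    have e2 : (X :&: Y)%VS == Y.
      rewrite -(dimv_leqif_eq (capvSr X Y)).2; apply/eqP; exact: etrans h1 (esym (dimr Y YU nY)).
    by rewrite -{1}(eqP e1) (eqP e2).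
  - by have := dimvS (subvf X); rewrite dim_rV3 (dimr X XU nX).
  - by have := hr X Y XU YU nXY; rewrite /dS (dimr X XU nX) (dimr Y YU nY).
have sub : {subset U' <= map (fun k : T => Kn (nk k)) (enum {: T})}.
  move=> Z; rewrite mem_filter => /andP [nZ ZU].
  have [k ->] := plane_key (F := F) (P := Z) (etrans (dimr Z ZU nZ) r2).
  by apply: map_f; rewrite mem_enum.
have := uniq_leq_size uU' sub; rewrite size_map -cardE.
by rewrite sU addn1 ltnS.
Qed.
End Main3.

Local Close Scope ring_scope.

Theorem proposition3 (F : finFieldType) :
  let q := #|F| in
  (exists U : seq {vspace 'rV[F]_3},
      equidistant_linear_code U /\ size U = 2 ^ trunc_log 2 (q ^ 2 + q + 2))
  /\ (forall U : seq {vspace 'rV[F]_3},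
      equidistant_linear_code U -> size U <= 2 ^ trunc_log 2 (q ^ 2 + q + 2)).
Proof.
move=> q.
have cT : (#|{: ((F * F) + (F + unit))%type}| + 1 = q ^ 2 + q + 2)%N.
  rewrite card_sum card_prod card_sum card_unit /q -mulnn.
  by rewrite addnA -[in LHS]addnA.
set N := (q ^ 2 + q + 2)%N.
have N0 : (0 < N)%N by rewrite /N addn2.
have tN : (2 ^ trunc_log 2 N <= N)%N := trunc_logP (isT : (1 < 2)%N) N0.
split.
  exists (codeU F (trunc_log 2 N)); split.
    by apply: codeU_elc; rewrite cT.
  by apply: codeU_size; rewrite cT.
move=> U hU.
have hs := upper_size hU; rewrite cT in hs.
case: hU => [[uU [zU [bp [cl [asc [cm [id0 [inv [nil0 _]]]]]]]]] _].
have [k sk] := pow2_size uU zU cl asc cm id0 nil0.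
rewrite sk in hs *.
rewrite leq_pexp2l //; apply: trunc_log_max => //.
Qed.
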